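(* If $p\le 1-1/e^2$, then for every $n$ we have $x_0(n)=0$.
   Context: Let $p\in(0,1)$ be constant, $q=1-p$, $b=1/q$, $\gamma=\gamma(n)=2\log_b n-2\log_b\log_b n-2\log_b 2$, $\Delta=\gamma-\lfloor\gamma\rfloor\in[0,1)$. Define $\varphi(x)=\varphi_n(x)=(1-\Delta+x)\log_b(1-\Delta+x)+(1-\Delta)(\Delta-x)/2$, and let $x_0=x_0(n)$ be the smallest nonnegative $x$ with $\varphi_n(x)\le0$ (well defined since $\varphi_n(\Delta)=0$, and $x_0\in[0,\Delta]$). *)

(* Defs.v *)
From Stdlib Require Import Reals Lra.
Open Scope R_scope.

Definition logb (b x : R) : R := ln x / ln b.

Definition base (p : R) : R := / (1 - p).

Definition gam (p : R) (n : nat) : R :=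
  let b := base p in
  2 * logb b (INR n) - 2 * logb b (logb b (INR n)) - 2 * logb b 2.

Definition Delta (p : R) (n : nat) : R :=
  gam p n - IZR (Int_part (gam p n)).

Definition phi (p : R) (n : nat) (x : R) : R :=
  let D := Delta p n in
  (1 - D + x) * logb (base p) (1 - D + x) + (1 - D) * (D - x) / 2.

Definition is_x0 (p : R) (n : nat) (x : R) : Prop :=
  0 <= x /\ phi p n x <= 0 /\
  (forall y, 0 <= y -> phi p n y <= 0 -> x <= y).

(* Main.v *)
Require Import Defs.
From Stdlib Require Import Reals Lra Psatz.
Open Scope R_scope.

Theorem lemma3 (p : R) (hp0 : 0 < p) (hp1 : p < 1)
  (hp : p <= 1 - / exp 2) :
  forall n : nat, (2 <= n)%nat -> is_x0 p n 0.
Proof.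
  intros n _.
  assert (HD : 0 <= Defs.Delta p n < 1).
  { unfold Defs.Delta. destruct (base_Int_part (gam p n)). lra. }
  set (D := Defs.Delta p n) in *.
  set (t := 1 - D).
  assert (Ht : 0 < t <= 1) by (unfold t; lra).
  assert (HL : ln (Defs.base p) = - ln (1 - p)).
  { unfold Defs.base. apply ln_Rinv. lra. }
  assert (Hq : exp (- (2)) <= 1 - p) by (rewrite (exp_Ropp 2); lra).
  assert (HL2 : ln (Defs.base p) <= 2).
  { rewrite HL. assert (ln (exp (- (2))) <= ln (1-p)).
    { destruct (Req_dec (exp (- (2))) (1-p)) as [E|E]. rewrite E; lra.
      left. apply ln_increasing. apply exp_pos. lra. }
    rewrite ln_exp in H. lra. }
  assert (HL0 : 0 < ln (Defs.base p)).
  { rewrite HL. assert (ln (1-p) < ln 1) by (apply ln_increasing; lra).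
    rewrite ln_1 in H. lra. }
  assert (Hlt : ln t <= t - 1).
  { pose proof (exp_ineq1_le (ln t)). rewrite exp_ln in H by lra. lra. }
  set (L := ln (Defs.base p)) in *.
  set (u := ln t / L).
  assert (Hu : ln t = u * L) by (unfold u; field; lra).
  assert (Hu0 : u <= 0). { destruct (Rle_dec u 0) as [h|h]; [exact h|]. assert (0 < u * L) by (apply Rmult_lt_0_compat; lra). lra. }
  assert (Hphi : phi p n 0 <= 0).
  { unfold phi. fold D. unfold logb. fold L.
    replace (1 - D + 0) with t by (unfold t; ring).
    fold u. replace (D - 0) with (1 - t) by (unfold t; ring).
    assert (u * 2 <= u * L) by nra. assert (u + (1 - t)/2 <= 0) by lra. replace (1 - D) with t by reflexivity. nra. }
  split; [lra|split; [exact Hphi|]].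
  intros y Hy _. exact Hy.
Qed.
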